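(* Let $\mathcal{H}$ be a complex Hilbert space, $A\in\mathcal{B}(\mathcal{H})$ positive and $S\in\mathcal{B}_A(\mathcal{H})$. Then $$d\omega_A^2(S)\le \omega_A^2\left(S^{\sharp_A}S+S\right)+\left\|\left(S^{\sharp_A}S\right)^2+S^{\sharp_A}S\right\|_A .$$
   Context: $\mathcal{B}(\mathcal{H})$ denotes the bounded linear operators on $\mathcal{H}$. For positive $A$, $\langle x,z\rangle_A=\langle Ax,z\rangle$ and $\|z\|_A=\|A^{1/2}z\|$. $\mathcal{B}_A(\mathcal{H})$ is the set of $S\in\mathcal{B}(\mathcal{H})$ for which some $R\in\mathcal{B}(\mathcal{H})$ satisfies $AR=S^*A$; for such $S$, $S^{\sharp_A}=A^{\dagger}S^*A$ with $A^\dagger$ the Moore–Penrose inverse of $A$. For operators $T$ bounded with respect to $\|\cdot\|_A$: $\|T\|_A=\sup_{\|z\|_A=1}\|Tz\|_A$, $\omega_A(T)=\sup_{\|z\|_A=1}|\langle Tz,z\rangle_A|$, and $d\omega_A(T)=\sup_{\|z\|_A=1}(|\langle Tz,z\rangle_A|^2+\|Tz\|_A^4)^{1/2}$. *)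

(* Defs.v *)
From HB Require Import structures.
From mathcomp Require Import all_boot all_order all_algebra.
From mathcomp Require Import boolp classical_sets reals.
From mathcomp Require Import complex.

Set Implicit Arguments.
Unset Strict Implicit.
Unset Printing Implicit Defensive.

Import Order.TTheory GRing.Theory Num.Theory.
Local Open Scope ring_scope.
Local Open Scope classical_set_scope.

Section HilbertDefs.
Variable R : realType.
Local Notation C := (R[i]).
Variable H : lmodType C.
Variable ip : H -> H -> C.

Definition cabs (z : C) : R := complex.Re `|z|.

Definition hnorm (x : H) : R := Num.sqrt (complex.Re (ip x x)).

Definition is_complex_hilbert : Prop :=
  [/\ (forall (a : C) (x y z : H), ip (a *: x + y) z = a * ip x z + ip y z),
      (forall x y : H, ip y x = conjc (ip x y)),
      (forall x : H, 0 <= ip x x),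
      (forall x : H, ip x x = 0 -> x = 0) &
      (forall u : nat -> H,
         (forall e : R, 0 < e -> exists N : nat, forall m n : nat,
             (N <= m)%N -> (N <= n)%N -> hnorm (u m - u n) < e) ->
         exists l : H, forall e : R, 0 < e -> exists N : nat, forall n : nat,
             (N <= n)%N -> hnorm (u n - l) < e)].

Definition bounded_op (T : H -> H) : Prop :=
  (forall (a : C) (x y : H), T (a *: x + y) = a *: T x + T y) /\
  exists M : R, forall x : H, hnorm (T x) <= M * hnorm x.

(* Hilbert adjoint T^* : the (unique, for bounded T) operator with
   <T x, y> = <x, T^* y>. *)
Definition adjoint (T : H -> H) : H -> H :=
  fun y => xget 0 [set z | forall x : H, ip (T x) y = ip x z].

Definition positive_op (A : H -> H) : Prop :=
  bounded_op A /\ forall x : H, 0 <= ip (A x) x.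

(* Moore-Penrose inverse of A applied to y (y in R(A) (+) R(A)^perp):
   the unique x in N(A)^perp with A x - y in R(A)^perp, i.e. A x = P_{cl R(A)} y. *)
Definition mp_inv (A : H -> H) (y : H) : H :=
  xget 0 [set x | (forall u : H, A u = 0 -> ip x u = 0) /\
                  (forall w : H, ip (A x - y) (A w) = 0)].

Definition in_BA (A S : H -> H) : Prop :=
  bounded_op S /\ exists Rop : H -> H, bounded_op Rop /\
    forall x : H, A (Rop x) = adjoint S (A x).

Definition sharpA (A S : H -> H) : H -> H :=
  fun z => mp_inv A (adjoint S (A z)).

Definition ipA (A : H -> H) (x z : H) : C := ip (A x) z.
Definition normA (A : H -> H) (z : H) : R := Num.sqrt (complex.Re (ipA A z z)).

Definition unitA (A : H -> H) : set H := [set z | normA A z = 1].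

Definition opnormA (A T : H -> H) : R :=
  sup [set normA A (T z) | z in unitA A].
Definition numradA (A T : H -> H) : R :=
  sup [set cabs (ipA A (T z) z) | z in unitA A].
Definition dnumradA (A T : H -> H) : R :=
  sup [set Num.sqrt (cabs (ipA A (T z) z) ^+ 2 + normA A (T z) ^+ 4) | z in unitA A].

End HilbertDefs.

(* Main.v *)
Require Import Defs.
From HB Require Import structures.
From mathcomp Require Import all_boot all_order all_algebra.
From mathcomp Require Import boolp classical_sets reals.
From mathcomp Require Import complex.
From mathcomp Require Import ring lra.
Import Order.TTheory GRing.Theory Num.Theory.
Set Implicit Arguments.
Unset Strict Implicit.
Unset Printing Implicit Defensive.
Local Open Scope ring_scope.
Local Open Scope classical_set_scope.
Local Notation re := complex.Re.
Local Notation im := complex.Im.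

Section Cx.
Variable R : realType.
Local Notation C := (R[i]).
Implicit Types x y : C.
Lemma cReD x y : re (x + y) = re x + re y. Proof. by case: x => a b; case: y => c d. Qed.
Lemma cImD x y : im (x + y) = im x + im y. Proof. by case: x => a b; case: y => c d. Qed.
Lemma cReN x : re (- x) = - re x. Proof. by case: x. Qed.
Lemma cImN x : im (- x) = - im x. Proof. by case: x. Qed.
Lemma cReB x y : re (x - y) = re x - re y. Proof. by rewrite cReD cReN. Qed.
Lemma cImB x y : im (x - y) = im x - im y. Proof. by rewrite cImD cImN. Qed.
Lemma cReM x y : re (x * y) = re x * re y - im x * im y. Proof. by case: x => a b; case: y => c d. Qed.
Lemma cImM x y : im (x * y) = re x * im y + im x * re y. Proof. by case: x => a b; case: y => c d. Qed.
Lemma cReJ x : re (conjc x) = re x. Proof. by case: x. Qed.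
Lemma cImJ x : im (conjc x) = - im x. Proof. by case: x. Qed.
Lemma cReR (r : R) : re (r%:C)%C = r. Proof. by []. Qed.
Lemma cImR (r : R) : im (r%:C)%C = 0. Proof. by []. Qed.
Lemma cRe1 : re (1 : C) = 1. Proof. by []. Qed.
Lemma cIm1 : im (1 : C) = 0. Proof. by []. Qed.
Lemma cRe0 : re (0 : C) = 0. Proof. by []. Qed.
Lemma cIm0 : im (0 : C) = 0. Proof. by []. Qed.
Lemma ceqP x y : re x = re y -> im x = im y -> x = y.
Proof. by case: x => a b; case: y => c d /= -> ->. Qed.
Lemma cge0 x : (0 <= x) = (im x == 0) && (0 <= re x).
Proof. by rewrite lecE eq_sym. Qed.
Lemma cjD x y : conjc (x + y) = conjc x + conjc y. Proof. by apply: ceqP; rewrite /= ?(cReD,cImD,cReJ,cImJ) // opprD. Qed.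
Lemma cjN x : conjc (- x) = - conjc x. Proof. by apply: ceqP; rewrite /= ?(cReN,cImN,cReJ,cImJ). Qed.
Lemma cjM x y : conjc (x * y) = conjc x * conjc y.
Proof. by apply: ceqP; rewrite /= ?(cReM,cImM,cReJ,cImJ); ring. Qed.
Lemma cjR (r : R) : conjc (r%:C)%C = (r%:C)%C. Proof. by apply: ceqP; rewrite /= ?(cReJ,cImJ) ?oppr0. Qed.
Lemma cjK x : conjc (conjc x) = x. Proof. by apply: ceqP; rewrite /= ?(cReJ,cImJ) ?opprK. Qed.
Lemma cj0 : conjc (0 : C) = 0. Proof. by apply: ceqP; rewrite /= ?(cReJ,cImJ) ?oppr0. Qed.
Definition csq (x : C) : R := re x ^+ 2 + im x ^+ 2.
Lemma csq_ge0 x : 0 <= csq x. Proof. rewrite /csq; nra. Qed.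
Lemma cabsE x : re `|x| = Num.sqrt (csq x).
Proof. by rewrite normc_def. Qed.
Lemma cabs_sq x : re `|x| ^+ 2 = csq x.
Proof. by rewrite cabsE sqr_sqrtr // csq_ge0. Qed.
Lemma cabs_ge0 x : 0 <= re `|x|. Proof. by rewrite cabsE sqrtr_ge0. Qed.
Lemma re_le_cabs x : re x <= re `|x|.
Proof.
rewrite cabsE; have h := csq_ge0 x.
have [hx|hx] := lerP (re x) 0; first by apply: le_trans hx (sqrtr_ge0 _).
rewrite -(ger0_norm (ltW hx)) -sqrtr_sqr ler_sqrt //; rewrite /csq; nra.
Qed.
Lemma cabs0 : re `|0 : C| = 0. Proof. by rewrite normr0. Qed.
Lemma cabs_eq0 x : re `|x| = 0 -> x = 0.
Proof.
rewrite cabsE => /eqP; rewrite sqrtr_eq0 /csq => h.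
apply: ceqP; rewrite /= ?cRe0 ?cIm0; nra.
Qed.
End Cx.

Lemma quad (R : realType) (a b k : R) : 0 <= k -> 0 <= b ->
  (forall t : R, 0 <= a - 2 * t * k + t ^+ 2 * k * b) -> k <= a * b.
Proof.
move=> k0 b0 h.
have [bz|bp] := eqVneq b 0.
  rewrite bz mulr0; have [kz|kp] := eqVneq k 0; first by rewrite kz.
  have := h ((a + 1) / (2 * k)); rewrite bz mulr0 addr0.
  have e : 2 * ((a + 1) / (2 * k)) * k = a + 1.
    by field.
  rewrite e; lra.
have bpos : 0 < b by rewrite lt_def bp b0.
have := h b^-1.
have e : b^-1 * b = 1 by rewrite mulVf.
move=> H1.
have H2 : 0 <= a - b^-1 * k.
  suff -> : a - b^-1 * k = a - 2 * b^-1 * k + b^-1 ^+ 2 * k * b by [].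
  by field.
have : 0 <= b * (a - b^-1 * k) by apply: mulr_ge0 => //; exact: ltW.
rewrite mulrBr mulrA mulfV // mul1r; lra.
Qed.

Section Form.
Variable R : realType.
Local Notation C := (R[i]).
Variable H : lmodType C.
Variable q : H -> H -> C.
Hypothesis qL : forall (a : C) (x y z : H), q (a *: x + y) z = a * q x z + q y z.
Hypothesis qC : forall x y : H, q y x = conjc (q x y).
Hypothesis qP : forall x : H, 0 <= q x x.
Set Default Proof Using "All".

Lemma q0l z : q 0 z = 0.
Proof.
have := qL 1 0 0 z; rewrite scaler0 addr0 mul1r => h.
by apply: (addrI (q 0 z)); rewrite addr0 -h.
Qed.
Lemma qDl x y z : q (x + y) z = q x z + q y z.
Proof. by rewrite -[x]scale1r qL mul1r scale1r. Qed.
Lemma qZl a x z : q (a *: x) z = a * q x z.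
Proof. by rewrite -[a *: x]addr0 qL q0l addr0. Qed.
Lemma qNl x z : q (- x) z = - q x z.
Proof. by rewrite -scaleN1r qZl mulN1r. Qed.
Lemma qBl x y z : q (x - y) z = q x z - q y z.
Proof. by rewrite qDl qNl. Qed.
Lemma q0r z : q z 0 = 0.
Proof. by rewrite qC q0l cj0. Qed.
Lemma qDr x y z : q z (x + y) = q z x + q z y.
Proof. by rewrite qC qDl cjD -!qC. Qed.
Lemma qZr a x z : q z (a *: x) = conjc a * q z x.
Proof. by rewrite qC qZl cjM -qC. Qed.
Lemma qNr x z : q z (- x) = - q z x.
Proof. by rewrite qC qNl cjN -qC. Qed.
Lemma qBr x y z : q z (x - y) = q z x - q z y.
Proof. by rewrite qDr qNr. Qed.

Definition nq x := re (q x x).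
Lemma nq_ge0 x : 0 <= nq x.
Proof. by have := qP x; rewrite cge0 => /andP[]. Qed.
Lemma qxx x : q x x = (nq x)%:C%C.
Proof. by have := qP x; rewrite cge0 => /andP[/eqP h _]; apply: ceqP. Qed.

Lemma nq_expand x y (t : R) :
  nq (x - ((t%:C)%C * q x y) *: y) =
  nq x - 2 * t * csq (q x y) + t ^+ 2 * csq (q x y) * nq y.
Proof.
rewrite /nq qBl !qBr !qZl !qZr (qC x y) qxx (qxx y).
move: (q x y) => u.
rewrite /csq !(cReD, cReB, cReN, cImN, cReM, cImM, cReJ, cImJ, cReR, cImR, cImD, cImB, cjM, cjR).
ring.
Qed.

Lemma cs2 x y : csq (q x y) <= nq x * nq y.
Proof.
apply: quad; [exact: csq_ge0 | exact: nq_ge0 |] => t.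
rewrite -nq_expand; exact: nq_ge0.
Qed.

Definition nrm x := Num.sqrt (nq x).
Lemma nrm_ge0 x : 0 <= nrm x. Proof. exact: sqrtr_ge0. Qed.
Lemma nrm_sq x : nrm x ^+ 2 = nq x. Proof. by rewrite sqr_sqrtr // nq_ge0. Qed.

Lemma cs x y : re `|q x y| <= nrm x * nrm y.
Proof.
rewrite cabsE /nrm -sqrtrM ?nq_ge0 // ler_sqrt; last by apply: mulr_ge0; exact: nq_ge0.
exact: cs2.
Qed.

Lemma nq_add x y : nq (x + y) = nq x + nq y + 2 * re (q x y).
Proof.
rewrite /nq qDl !qDr (qC x y) !cReD cReJ; ring.
Qed.

Lemma nrm_triangle x y : nrm (x + y) <= nrm x + nrm y.
Proof.
have h1 := re_le_cabs (q x y); have h2 := cs x y.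
have h3 : nq (x + y) <= (nrm x + nrm y) ^+ 2.
  rewrite nq_add sqrrD !nrm_sq; lra.
rewrite /nrm -(ger0_norm (addr_ge0 (nrm_ge0 x) (nrm_ge0 y))) -sqrtr_sqr ler_sqrt //.
exact: sqr_ge0.
Qed.

Lemma nqZ (c : R) x : nq ((c%:C)%C *: x) = c ^+ 2 * nq x.
Proof. rewrite /nq qZl qZr cjR qxx !(cReM, cImM, cReR, cImR); ring. Qed.

Lemma nqN x : nq (- x) = nq x.
Proof. by rewrite /nq qNl qNr opprK. Qed.

Lemma nq_eq0_q x y : nq x = 0 -> q x y = 0.
Proof.
move=> h; apply: cabs_eq0; apply/eqP; rewrite eq_le cabs_ge0 andbT.
by have := cs x y; rewrite /nrm h sqrtr0 mul0r.
Qed.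

Lemma cabs_unit w z : nq z = 1 -> re `|q w z| <= nrm w.
Proof. by move=> h; have := cs w z; rewrite /nrm h sqrtr1 mulr1. Qed.

End Form.
Unset Default Proof Using.

Lemma small_inv (R : realType) (e : R) : 0 < e -> exists N : nat, forall n, (N <= n)%N -> (n.+1%:R)^-1 < e.
Proof.
move=> e0; exists (Num.truncn e^-1) => n hn.
have ie : 0 < e^-1 by rewrite invr_gt0.
have /andP[_ h] := truncn_itv (ltW ie).
have h2 : e^-1 < n.+1%:R.
  apply: lt_le_trans h _; rewrite ler_nat; by [].
rewrite -[e]invrK ltf_pV2 ?posrE ?invr_gt0 //; exact: ltr0Sn.
Qed.

Lemma sqrt_add_le (R : realType) (a b : R) : 0 <= a -> 0 <= b -> Num.sqrt (a + b) <= Num.sqrt a + Num.sqrt b.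
Proof.
move=> a0 b0.
have ha := sqrtr_ge0 a; have hb := sqrtr_ge0 b.
rewrite -(ger0_norm (addr_ge0 ha hb)) -sqrtr_sqr ler_sqrt; last exact: sqr_ge0.
rewrite sqrrD !sqr_sqrtr //.
have : 0 <= Num.sqrt a * Num.sqrt b by apply: mulr_ge0.
lra.
Qed.

Section Hilb.
Variable R : realType.
Local Notation C := (R[i]).
Variable H : lmodType C.
Variable ip : H -> H -> C.
Hypothesis ipL : forall (a : C) (x y z : H), ip (a *: x + y) z = a * ip x z + ip y z.
Hypothesis ipC : forall x y : H, ip y x = conjc (ip x y).
Hypothesis ipP : forall x : H, 0 <= ip x x.
Hypothesis ipD : forall x : H, ip x x = 0 -> x = 0.
Hypothesis ipComp : forall u : nat -> H,
         (forall e : R, 0 < e -> exists N : nat, forall m n : nat,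
             (N <= m)%N -> (N <= n)%N -> nrm ip (u m - u n) < e) ->
         exists l : H, forall e : R, 0 < e -> exists N : nat, forall n : nat,
             (N <= n)%N -> nrm ip (u n - l) < e.

Local Notation N := (nq ip).
Local Notation nm := (nrm ip).

Lemma nq_sub_sym x y : N (x - y) = N (y - x).
Proof. by rewrite -(nqN ipL ipC ipP) opprB. Qed.

Lemma nm_sub_sym x y : nm (x - y) = nm (y - x).
Proof. by rewrite /nrm nq_sub_sym. Qed.

Lemma parallelogram a b : N (a + b) + N (a - b) = 2 * N a + 2 * N b.
Proof.
rewrite !(nq_add ipL ipC ipP) (nqN ipL ipC ipP) (qNr ipL ipC ipP) cReN; ring.
Qed.

Lemma nq_eq0 x : N x = 0 -> x = 0.
Proof. by move=> h; apply: ipD; rewrite (qxx ipL ipC ipP) h. Qed.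

Lemma projection (P : H -> Prop) :
  P 0 -> (forall x y, P x -> P y -> P (x + y)) -> (forall a x, P x -> P (a *: x)) ->
  (forall x, (forall e, 0 < e -> exists m, P m /\ nm (x - m) < e) -> P x) ->
  forall r, exists m, P m /\ forall v, P v -> ip (r - m) v = 0.
Proof.
move=> P0 PD PZ Pcl r.
pose D : set R := [set x : R | exists2 m : H, P m & N (r - m) = x].
pose d := inf D.
have Dn : D !=set0 by exists (N (r - 0)); exists 0.
have Dl : has_lbound D by exists 0 => _ [m _ <-]; exact: nq_ge0.
have dle : forall m, P m -> d <= N (r - m).
  by move=> m Pm; apply: ge_inf => //; exists m.
have d0 : 0 <= d by apply: lb_le_inf => // _ [m _ <-]; exact: nq_ge0.
have ex : forall n : nat, exists m, P m /\ N (r - m) < d + (n.+1%:R)^-1.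
  move=> n; have ip0 : 0 < (n.+1%:R : R)^-1 by rewrite invr_gt0 ltr0Sn.
  have [e [m Pm <-] he] := inf_adherent ip0 (conj Dn Dl).
  by exists m.
have [f hf] := choice ex.
have Pf : forall n, P (f n) by move=> n; case: (hf n).
have hf2 : forall n, N (r - f n) < d + (n.+1%:R)^-1 by move=> n; case: (hf n).
have cau : forall n k, N (f n - f k) <= 2 * (n.+1%:R)^-1 + 2 * (k.+1%:R)^-1.
  move=> n k.
  have hp := parallelogram (r - f k) (r - f n).
  have e1 : (r - f k) - (r - f n) = f n - f k.
    by rewrite opprB addrC addrA subrK.
  have e2 : (r - f k) + (r - f n) = (2%:C)%C *: (r - ((2^-1)%:C)%C *: (f n + f k)).
    rewrite scalerBr scalerA -rmorphM mulfV ?pnatr_eq0 // rmorph1 scale1r.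
    have two : (2%:C)%C = (1 + 1 : C).
      by apply: ceqP; rewrite ?cReD ?cImD ?cRe1 ?cIm1 ?cReR ?cImR; lra.
    by rewrite two scalerDl scale1r addrACA opprD [- f k + _]addrC.
  rewrite e1 e2 (nqZ ipL ipC ipP) in hp.
  have := dle _ (PZ ((2^-1)%:C)%C _ (PD _ _ (Pf n) (Pf k))).
  move: hp; have := hf2 n; have := hf2 k. set w := N (r - _ *: _). rewrite expr2. set a1 := (n.+1%:R)^-1. set a2 := (k.+1%:R)^-1. lra.
have cauchy : forall e, 0 < e -> exists M, forall m n, (M <= m)%N -> (M <= n)%N -> nm (f m - f n) < e.
  move=> e e0.
  have e2 : 0 < e ^+ 2 / 4 by apply: divr_gt0; [exact: exprn_gt0|].
  have [M hM] := small_inv e2.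
  exists M => m n hm hn.
  have h1 := hM _ hm; have h2 := hM _ hn; have h3 := cau m n.
  rewrite /nrm -(ger0_norm (ltW e0)) -sqrtr_sqr ltr_sqrt; last exact: exprn_gt0.
  move: h1 h2 h3; set a1 := (m.+1%:R)^-1; set a2 := (n.+1%:R)^-1; set E := e ^+ 2. lra.
have [l hl] := ipComp cauchy.
have Pl : P l.
  apply: Pcl => e e0; have [M hM] := hl e e0; exists (f M); split => //.
  by rewrite nm_sub_sym; apply: hM.
have key : N (r - l) <= d.
  have hsq : nm (r - l) <= Num.sqrt d.
    apply/ler_addgt0Pr => e e0.
    have two0 : (0:R) < 2 by lra.
    have e2 : 0 < (e / 2) ^+ 2 by apply: exprn_gt0; apply: divr_gt0.
    have [M1 hM1] := small_inv e2.
    have [M2 hM2] := hl (e / 2) (divr_gt0 e0 two0).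
    pose n := maxn M1 M2.
    have h1 := hM1 n (leq_maxl _ _).
    have h2 := hM2 n (leq_maxr _ _).
    have tri := nrm_triangle ipL ipC ipP (r - f n) (f n - l).
    rewrite addrA subrK in tri.
    have h3 : nm (r - f n) <= Num.sqrt d + e / 2.
      apply: le_trans (_ : Num.sqrt (d + (n.+1%:R)^-1) <= _).
        have hpos : 0 <= d + (n.+1%:R)^-1 by apply: addr_ge0 => //; rewrite invr_ge0 ler0n.
        by rewrite /nrm ler_sqrt // ltW.
      have hi : 0 <= (n.+1%:R : R)^-1 by rewrite invr_ge0 ler0n.
      apply: (le_trans (sqrt_add_le d0 hi)).
      rewrite lerD2l -(ger0_norm (ltW (divr_gt0 e0 two0))) -sqrtr_sqr ler_sqrt ?ltW //.
    lra.
  by move: hsq; rewrite /nrm ler_sqrt.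
exists l; split => // v Pv.
have hq : forall t : R, 0 <= 0 - 2 * t * csq (ip (r - l) v) + t ^+ 2 * csq (ip (r - l) v) * N v.
  move=> t; have hm := dle _ (PD _ _ Pl (PZ ((t%:C)%C * ip (r - l) v) _ Pv)).
  have e : r - (l + ((t%:C)%C * ip (r - l) v) *: v) = (r - l) - ((t%:C)%C * ip (r - l) v) *: v.
    by rewrite opprD addrA.
  rewrite e (nq_expand ipL ipC ipP) in hm.
  lra.
have := quad (csq_ge0 _) (nq_ge0 ipL ipC ipP v) hq.
rewrite mul0r => hc.
apply: cabs_eq0; rewrite cabsE.
have -> : csq (ip (r - l) v) = 0 by apply/eqP; rewrite eq_le hc csq_ge0.
exact: sqrtr0.
Qed.

Lemma riesz (f : H -> C) :
  (forall (a : C) x y, f (a *: x + y) = a * f x + f y) ->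
  (exists M : R, forall x, re `|f x| <= M * nm x) ->
  exists z, forall x, f x = ip x z.
Proof.
move=> fL [M fB].
have f0 : f 0 = 0.
  have := fL 1 0 0; rewrite scaler0 addr0 mul1r => h.
  by apply: (addrI (f 0)); rewrite addr0 -h.
have fD : forall x y, f (x + y) = f x + f y by move=> x y; rewrite -[x]scale1r fL mul1r scale1r.
have fZ : forall a x, f (a *: x) = a * f x by move=> a x; rewrite -[a *: x]addr0 fL f0 addr0.
have fB' : forall x y, f (x - y) = f x - f y.
  by move=> x y; rewrite fD -scaleN1r fZ mulN1r.
have [allz|] := pselect (forall x, f x = 0).
  by exists 0 => x; rewrite allz (q0r ipL ipC ipP).
move=> /existsNP [x0 fx0].
pose P x := f x = 0.
have P0 : P 0 by [].
have PD : forall x y, P x -> P y -> P (x + y) by move=> x y; rewrite /P fD => -> ->; rewrite addr0.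
have PZ : forall a x, P x -> P (a *: x) by move=> a x; rewrite /P fZ => ->; rewrite mulr0.
have Pcl : forall x, (forall e, 0 < e -> exists m, P m /\ nm (x - m) < e) -> P x.
  move=> x hx; apply: cabs_eq0; apply/eqP; rewrite eq_le cabs_ge0 andbT; apply/negP => /negP.
  rewrite -ltNge => hpos.
  have hM : 0 < `|M| + 1 by apply: ltr_pwDr => //.
  have [m [Pm hm]] := hx _ (divr_gt0 hpos hM).
  have := fB (x - m); rewrite fB' Pm subr0 => h.
  have h2 : M * nm (x - m) <= (`|M| + 1) * nm (x - m).
    apply: ler_wpM2r; first exact: nrm_ge0.
    apply: le_trans (ler_norm M) _; lra.
  have h3 : (`|M| + 1) * nm (x - m) < re `|f x|.
    by rewrite mulrC -ltr_pdivlMr.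
  have := le_lt_trans (le_trans h h2) h3; by rewrite ltxx.
have [m [Pm orth]] := projection P0 PD PZ Pcl x0.
pose p := x0 - m.
have fp : f p = f x0 by rewrite /p fB' Pm subr0.
have pn0 : ip p p != 0.
  apply/eqP => /ipD pz; apply: fx0; by rewrite -fp pz.
exists ((conjc (f p / ip p p)) *: p) => x.
have Pv : P (x - (f x / f p) *: p).
  rewrite /P fB' fZ fp -mulrA mulVf ?mulr1 ?subrr //; exact/eqP.
have := orth _ Pv; rewrite -/p (qBr ipL ipC ipP) (qZr ipL ipC ipP).
set c := f x / f p => h.
have h' : ip x p = c * ip p p.
  have : conjc (ip p x - conjc c * ip p p) = 0 by rewrite h cj0.
  rewrite cjD cjN cjM cjK -(ipC p x) -(ipC p p) => /eqP; rewrite subr_eq0 => /eqP ->.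
  done.
rewrite (qZr ipL ipC ipP) cjK h'.
have fpn : f p != 0 by rewrite fp; exact/eqP.
rewrite /c; field; by rewrite fpn pn0.
Qed.

End Hilb.

Lemma sup_ge0 (R : realType) (E : set R) : (forall x, E x -> 0 <= x) -> 0 <= sup E.
Proof.
move=> h; have [hs|hs] := pselect (has_sup E); last by rewrite sup_out.
have [[x Ex] _] := hs; apply: le_trans (h x Ex) _; exact: sup_upper_bound.
Qed.

Lemma cabsR (R : realType) (r : R) : re `|(r%:C)%C| = `|r|.
Proof. by rewrite cabsE /csq cReR cImR expr0n addr0 sqrtr_sqr. Qed.

Section Main.
Variable R : realType.
Local Notation C := (R[i]).
Variable H : lmodType C.
Variable ip : H -> H -> C.
Hypothesis ipL : forall (a : C) (x y z : H), ip (a *: x + y) z = a * ip x z + ip y z.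
Hypothesis ipC : forall x y : H, ip y x = conjc (ip x y).
Hypothesis ipP : forall x : H, 0 <= ip x x.
Hypothesis ipD : forall x : H, ip x x = 0 -> x = 0.
Hypothesis ipComp : forall u : nat -> H,
         (forall e : R, 0 < e -> exists N : nat, forall m n : nat,
             (N <= m)%N -> (N <= n)%N -> nrm ip (u m - u n) < e) ->
         exists l : H, forall e : R, 0 < e -> exists N : nat, forall n : nat,
             (N <= n)%N -> nrm ip (u n - l) < e.

Local Notation nm := (nrm ip).

Section Lin.
Variable T : H -> H.
Hypothesis TL : forall (a : C) (x y : H), T (a *: x + y) = a *: T x + T y.
Lemma lin0 : T 0 = 0.
Proof.
have := TL 1 0 0; rewrite scaler0 addr0 scale1r => h.
by apply: (addrI (T 0)); rewrite addr0 -h.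
Qed.
Lemma linD x y : T (x + y) = T x + T y.
Proof. by have := TL 1 x y; rewrite !scale1r. Qed.
Lemma linZ a x : T (a *: x) = a *: T x.
Proof. by rewrite -[a *: x]addr0 TL lin0 addr0. Qed.
Lemma linB x y : T (x - y) = T x - T y.
Proof.
have hN : T (- y) = - T y by apply/eqP; rewrite -addr_eq0 -linD addNr lin0.
by rewrite linD hN.
Qed.
End Lin.

Lemma adjointP (S : H -> H) : bounded_op ip S ->
  forall y x, ip (S x) y = ip x (adjoint ip S y).
Proof.
move=> [SL [M SB]] y.
have ex : exists z, forall x, ip (S x) y = ip x z.
  apply: (riesz ipL ipC ipP ipD ipComp).
    by move=> a x x'; rewrite SL ipL.
  exists (M * nm y) => x.
  apply: le_trans (cs ipL ipC ipP (S x) y) _.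
  rewrite mulrAC; apply: ler_wpM2r; first exact: nrm_ge0.
  exact: SB.
exact: (xgetPex 0 ex).
Qed.

Lemma mp_invP (A : H -> H) : bounded_op ip A ->
  forall r, A (mp_inv ip A (A r)) = A r.
Proof.
move=> [AL [M AB]] r.
pose P x := A x = 0.
have P0 : P 0 by exact: lin0.
have PD : forall x y, P x -> P y -> P (x + y).
  by move=> x y; rewrite /P (linD AL) => -> ->; rewrite addr0.
have PZ : forall a x, P x -> P (a *: x).
  by move=> a x; rewrite /P (linZ AL) => ->; rewrite scaler0.
have Pcl : forall x, (forall e, 0 < e -> exists m, P m /\ nm (x - m) < e) -> P x.
  move=> x hx; apply: (nq_eq0 ipL ipC ipP ipD).
  have h0 : nm (A x) = 0.
    apply/eqP; rewrite eq_le (nrm_ge0 ipL ipC ipP) andbT; apply/negP => /negP.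
    rewrite -ltNge => hpos.
    have hM : 0 < `|M| + 1 by apply: ltr_pwDr => //.
    have [m [Pm hm]] := hx _ (divr_gt0 hpos hM).
    have := AB (x - m); rewrite (linB AL) Pm subr0 => h.
    have h2 : M * nm (x - m) <= (`|M| + 1) * nm (x - m).
      apply: ler_wpM2r; first exact: nrm_ge0.
      apply: le_trans (ler_norm M) _; lra.
    have h3 : (`|M| + 1) * nm (x - m) < nm (A x).
      by rewrite mulrC -ltr_pdivlMr.
    have := le_lt_trans (le_trans h h2) h3; by rewrite ltxx.
  by rewrite -(nrm_sq ipL ipC ipP) h0 expr0n.
have [m [Pm orth]] := projection ipL ipC ipP ipComp P0 PD PZ Pcl r.
have ex : exists x, (forall u, A u = 0 -> ip x u = 0) /\
                    (forall w, ip (A x - A r) (A w) = 0).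
  exists (r - m); split; first by move=> u hu; apply: orth.
  by move=> w; rewrite (linB AL) Pm subr0 subrr (q0l ipL ipC ipP).
have [_ h2] := xgetPex 0 ex.
rewrite -/(mp_inv ip A (A r)) in h2.
set x0 := mp_inv ip A (A r) in h2 *.
have := h2 (x0 - r); rewrite -(linB AL) => /ipD.
by rewrite (linB AL) => /eqP; rewrite subr_eq0 => /eqP.
Qed.


Lemma A_sa (A : H -> H) : (forall (a : C) (x y : H), A (a *: x + y) = a *: A x + A y) ->
  (forall x, 0 <= ip (A x) x) -> forall x y, ip (A y) x = conjc (ip (A x) y).
Proof.
move=> AL AP x y.
have im0 z : im (ip (A z) z) = 0 by have := AP z; rewrite cge0 => /andP[/eqP].
have ri : re ('i%C : C) = 0 by [].
have ii : im ('i%C : C) = 1 by [].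
have h1 := im0 (x + y).
rewrite (linD AL) (qDl ipL ipC ipP) !(qDr ipL ipC ipP) !cImD (im0 x) (im0 y) in h1.
have h2 := im0 (x + 'i%C *: y).
rewrite (linD AL) (linZ AL) (qDl ipL ipC ipP) !(qDr ipL ipC ipP) !(qZl ipL ipC ipP) !(qZr ipL ipC ipP) in h2.
rewrite !(cImD, cImM, cReM, cImJ, cReJ, cReD) ri ii ?im0 in h2.
apply: ceqP; rewrite ?cReJ ?cImJ; lra.
Qed.

Lemma sharpP (A S : H -> H) : bounded_op ip A -> in_BA ip A S ->
  forall w x, ip (A (sharpA ip A S w)) x = ip (A w) (S x).
Proof.
move=> hA [hS [Rop [_ hR]]] w x.
rewrite /sharpA -hR (mp_invP hA) hR ipC -(adjointP hS).
by rewrite -ipC.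
Qed.

Lemma main_ineq (A S : H -> H) : positive_op ip A -> in_BA ip A S ->
  dnumradA ip A S ^+ 2 <=
    numradA ip A (fun z => sharpA ip A S (S z) + S z) ^+ 2
    + opnormA ip A (fun z =>
        sharpA ip A S (S (sharpA ip A S (S z))) + sharpA ip A S (S z)).
Proof.
move=> [hA AP] hBA.
have AL := hA.1.
have SL := hBA.1.1.
pose q := ipA ip A.
have qL : forall (a : C) (x y z : H), q (a *: x + y) z = a * q x z + q y z.
  by move=> a x y z; rewrite /q /ipA AL ipL.
have qC : forall x y, q y x = conjc (q x y) by move=> x y; exact: A_sa.
have qP : forall x, 0 <= q x x by move=> x; exact: AP.
pose T z := sharpA ip A S (S z).
have key : forall u x, q (T u) x = q (S u) (S x).
  by move=> u x; rewrite /q /ipA /T (sharpP hA hBA).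
have unitE : forall z, unitA ip A z -> nq q z = 1.
  move=> z h; change (nrm q z = 1) in h.
  by rewrite -(nrm_sq qL qC qP) h expr1n.
rewrite /dnumradA /numradA /opnormA.
set LS := [set _ | _ in _].
set NS := [set _ | _ in _].
set OS := [set _ | _ in _].
have L0 : 0 <= sup LS by apply: sup_ge0 => _ [z _ <-]; exact: sqrtr_ge0.
have O0 : 0 <= sup OS by apply: sup_ge0 => _ [z _ <-]; exact: sqrtr_ge0.
have RHS0 : 0 <= sup NS ^+ 2 + sup OS by apply: addr_ge0 => //; exact: sqr_ge0.
suff hs : sup LS <= Num.sqrt (sup NS ^+ 2 + sup OS).
  by rewrite -(sqr_sqrtr RHS0) !expr2; exact: (ler_pM L0 L0 hs hs).
have [hsup|hsup] := pselect (has_sup LS); last by rewrite sup_out // sqrtr_ge0.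
have [[l0 hl0] [K hK]] := hsup.
have [z0 hz0 _] := hl0.
have nrm1 : forall z, unitA ip A z -> nrm q z = 1.
  by move=> z hz; rewrite /nrm unitE // sqrtr1.
have e4 : forall x, nrm q x ^+ 4 = nq q x ^+ 2.
  by move=> x; rewrite -(nrm_sq qL qC qP) -exprM.
have Sz_le : forall z, unitA ip A z -> nq q (S z) <= K.
  move=> z hz; have := hK _ (ex_intro2 _ _ z hz erefl).
  apply: le_trans.
  change (nq q (S z) <= Num.sqrt (re `|q (S z) z| ^+ 2 + nrm q (S z) ^+ 4)).
  rewrite e4 -{1}(ger0_norm (nq_ge0 qL qC qP (S z))) -sqrtr_sqr ler_sqrt; last first.
    by apply: addr_ge0; exact: sqr_ge0.
  have := sqr_ge0 (re `|q (S z) z|); lra.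
have K0 : 0 <= K := le_trans (nq_ge0 qL qC qP _) (Sz_le z0 hz0).
have SB : forall x, nq q (S x) <= K * nq q x.
  move=> x; have [nx0|nxp] := eqVneq (nq q x) 0.
    rewrite nx0 mulr0 /nq -key qC (nq_eq0_q qL qC qP _ nx0) cj0; exact: lexx.
  have np : 0 < nq q x by rewrite lt_def nxp nq_ge0.
  pose c := (Num.sqrt (nq q x))^-1.
  have hc2 : c ^+ 2 = (nq q x)^-1 by rewrite /c exprVn sqr_sqrtr // ltW.
  have hz : nq q ((c%:C)%C *: x) = 1 by rewrite (nqZ qL qC qP) hc2 mulVf.
  have hu : unitA ip A ((c%:C)%C *: x).
    by change (nrm q ((c%:C)%C *: x) = 1); rewrite /nrm hz sqrtr1.
  have := Sz_le _ hu; rewrite /T (linZ SL) (nqZ qL qC qP) hc2 => h.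
  have := ler_wpM2l (ltW np) h.
  by rewrite mulrA mulfV // mul1r mulrC.
pose k := Num.sqrt K.
have k0 : 0 <= k := sqrtr_ge0 K.
have SBn : forall x, nrm q (S x) <= k * nrm q x.
  move=> x; rewrite /nrm /k -sqrtrM // ler_sqrt; first exact: SB.
  by apply: mulr_ge0 => //; exact: nq_ge0.
have TBn : forall x, nrm q (T x) <= k ^+ 2 * nrm q x.
  move=> x.
  have h1 : nq q (T x) <= (k * nrm q x) * (k * nrm q (T x)).
    rewrite /nq (key x (T x)); apply: le_trans (re_le_cabs _) _.
    apply: le_trans (cs qL qC qP _ _) _.
    apply: ler_pM; try exact: nrm_ge0; exact: SBn.
  rewrite -(nrm_sq qL qC qP) in h1.
  have y0 := nrm_ge0 qL qC qP (T x); have x0 := nrm_ge0 qL qC qP x.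
  have hk2X : 0 <= k ^+ 2 * nrm q x by apply: mulr_ge0 => //; exact: sqr_ge0.
  move: h1 y0 x0 hk2X; set y := nrm q (T x); set X := nrm q x => h1 y0 x0 hk2X.
  nra.
have hNS : has_sup NS.
  split; first by exists (re `|q (T z0 + S z0) z0|); exists z0.
  exists (k ^+ 2 + k) => _ [z hz <-].
  change (re `|q (T z + S z) z| <= k ^+ 2 + k).
  apply: le_trans (cabs_unit qL qC qP _ (unitE z hz)) _.
  apply: le_trans (nrm_triangle qL qC qP _ _) _.
  have := TBn z; have := SBn z; rewrite (nrm1 z hz) !mulr1; lra.
have hOS : has_sup OS.
  split; first by exists (nrm q (T (T z0) + T z0)); exists z0.
  exists (k ^+ 2 * k ^+ 2 + k ^+ 2) => _ [z hz <-].
  change (nrm q (T (T z) + T z) <= k ^+ 2 * k ^+ 2 + k ^+ 2).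
  apply: le_trans (nrm_triangle qL qC qP _ _) _.
  have h1 := TBn (T z); have h2 := TBn z; rewrite (nrm1 z hz) mulr1 in h2.
  have h3 : k ^+ 2 * nrm q (T z) <= k ^+ 2 * k ^+ 2 by apply: ler_wpM2l => //; exact: sqr_ge0.
  lra.
apply: ge_sup; first by exists l0.
move=> _ [z hz <-].
rewrite ler_sqrt //.
change (re `|q (S z) z| ^+ 2 + nrm q (S z) ^+ 4 <= sup NS ^+ 2 + sup OS).
rewrite cabs_sq e4.
have a0 := nq_ge0 qL qC qP (S z).
have hb : csq (q (S z) z) <= nq q (S z).
  have h := cabs_unit qL qC qP (S z) (unitE z hz).
  rewrite -cabs_sq -(nrm_sq qL qC qP) !expr2; apply: ler_pM => //; exact: cabs_ge0.
have hN : csq ((nq q (S z))%:C%C + q (S z) z) <= sup NS ^+ 2.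
  have hq : q (T z + S z) z = (nq q (S z))%:C%C + q (S z) z.
    by rewrite (qDl qL qC qP) key (qxx qL qC qP).
  have h1 : re `|q (T z + S z) z| <= sup NS by apply: sup_upper_bound => //; exists z.
  rewrite -hq -cabs_sq !expr2; apply: ler_pM => //; first exact: cabs_ge0.
    exact: cabs_ge0.
have hO : nq q (T z) + nq q (S z) <= sup OS.
  have h : nrm q (T (T z) + T z) <= sup OS by apply: sup_upper_bound => //; exists z.
  have hq : q (T (T z) + T z) z = ((nq q (T z) + nq q (S z))%:C)%C.
    rewrite (qDl qL qC qP) (key (T z) z) (qC (S z) (S (T z))) -(key z (T z)).
    rewrite (qxx qL qC qP (T z)) cjR (key z z) (qxx qL qC qP (S z)).
    by apply: ceqP; rewrite ?cReD ?cImD ?cReR ?cImR ?addr0.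
  have := cabs_unit qL qC qP (T (T z) + T z) (unitE z hz).
  rewrite hq cabsR ger0_norm; last by apply: addr_ge0; exact: nq_ge0.
  move=> h'; exact: le_trans h' h.
have hT : nq q (S z) ^+ 2 <= nq q (T z).
  have ha : nq q (S z) <= nrm q (T z).
    have := cabs_unit qL qC qP (T z) (unitE z hz).
    apply: le_trans; rewrite key (qxx qL qC qP); have := re_le_cabs ((nq q (S z))%:C%C).
    by rewrite cReR.
  rewrite -(nrm_sq qL qC qP (T z)) !expr2; exact: ler_pM.
move: hb hN hO hT a0; rewrite /csq cReD cImD cReR cImR add0r.
set a := nq q (S z); set rb := re (q (S z) z); set ib := im (q (S z) z).
set t := nq q (T z); set s1 := sup NS; set s2 := sup OS.
move=> hb hN hO hT a0.
have P1 : 0 <= a * (rb + 1) ^+ 2 by apply: mulr_ge0 => //; exact: sqr_ge0.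
have P2 : 0 <= a * (a - (rb ^+ 2 + ib ^+ 2)) by apply: mulr_ge0 => //; lra.
nra.
Qed.

End Main.


Local Close Scope classical_set_scope.

Theorem corollary2p4 (R : realType) (H : lmodType R[i]) (ip : H -> H -> R[i])
  (A S : H -> H) :
  is_complex_hilbert ip -> positive_op ip A -> in_BA ip A S ->
  dnumradA ip A S ^+ 2 <=
    numradA ip A (fun z => sharpA ip A S (S z) + S z) ^+ 2
    + opnormA ip A (fun z =>
        sharpA ip A S (S (sharpA ip A S (S z))) + sharpA ip A S (S z)).
Proof.
move=> [ipL ipC ipP ipD ipComp] hA hS.
exact: (main_ineq ipL ipC ipP ipD ipComp hA hS).
Qed.
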